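(* Every $5$-dimensional Acaa-algebra over a field $\mathbb K$ of characteristic $0$ is isomorphic to one of the following algebras, each given in a basis $\{e_1,\dots,e_5\}$ with all brackets of basis vectors not listed (and not determined by anticommutativity) equal to zero: (1) the $5$-dimensional abelian algebra; (2) $\mathcal H_3\oplus\mathbb K^2$: $[e_1,e_2]=e_3$; (3) the $2$-step nilpotent Lie algebra $[e_1,e_2]=e_3$, $[e_1,e_4]=e_5$; (4) the $5$-dimensional Heisenberg Lie algebra $\mathcal H_5$: $[e_1,e_2]=e_5$, $[e_3,e_4]=e_5$.
   Context: An Acaa-algebra over a field $\mathbb K$ of characteristic $0$ is a $\mathbb K$-vector space $A$ with a bilinear product $[\cdot,\cdot]$ which is anticommutative, $[x,y]=-[y,x]$, and satisfies $[x_1,[x_2,x_3]]=[x_2,[x_3,x_1]]$ for all $x_1,x_2,x_3\in A$. Isomorphism means a linear bijection preserving the bracket. *)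

(* Defs.v *)
From HB Require Import structures.
From mathcomp Require Import all_boot all_order all_algebra.
Set Implicit Arguments. Unset Strict Implicit. Unset Printing Implicit Defensive.
Import GRing.Theory.
Local Open Scope ring_scope.

Definition bilinear_br (K : fieldType) (V : lmodType K) (br : V -> V -> V) :=
  (forall (a : K) (x y z : V), br (a *: x + y) z = a *: br x z + br y z) /\
  (forall (a : K) (x y z : V), br x (a *: y + z) = a *: br x y + br x z).

Definition is_acaa (K : fieldType) (V : lmodType K) (br : V -> V -> V) :=
  [/\ bilinear_br br,
      (forall x y : V, br x y = - br y x) &
      (forall x1 x2 x3 : V, br x1 (br x2 x3) = br x2 (br x3 x1))].

Definition acaa_iso (K : fieldType) (V W : lmodType K)
    (brV : V -> V -> V) (brW : W -> W -> W) (f : V -> W) :=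
  [/\ (forall (a : K) (x y : V), f (a *: x + y) = a *: f x + f y),
      bijective f &
      (forall x y : V, f (brV x y) = brW (f x) (f y))].

(* The model algebras on K^5 = 'rV[K]_5, with basis e_1..e_5 = delta_mx 0 i
   (indices shifted: e_(k+1) is the ordinal k). *)
Definition br_of_table (K : fieldType) (c : 'I_5 -> 'I_5 -> 'rV[K]_5)
    (u v : 'rV[K]_5) : 'rV[K]_5 :=
  \sum_(i < 5) \sum_(j < 5) (u 0 i * v 0 j) *: c i j.

Definition e (K : fieldType) (k : nat) : 'rV[K]_5 := delta_mx 0 (inord k.-1).

Definition idx (i : 'I_5) : nat := (i : nat).+1.

Definition tab_abelian (K : fieldType) : 'I_5 -> 'I_5 -> 'rV[K]_5 :=
  fun _ _ => 0.

Definition tab_H3K2 (K : fieldType) : 'I_5 -> 'I_5 -> 'rV[K]_5 :=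
  fun i j =>
    if (idx i == 1%N) && (idx j == 2%N) then e K 3
    else if (idx i == 2%N) && (idx j == 1%N) then - e K 3
    else 0.

Definition tab_N52 (K : fieldType) : 'I_5 -> 'I_5 -> 'rV[K]_5 :=
  fun i j =>
    if (idx i == 1%N) && (idx j == 2%N) then e K 3
    else if (idx i == 2%N) && (idx j == 1%N) then - e K 3
    else if (idx i == 1%N) && (idx j == 4%N) then e K 5
    else if (idx i == 4%N) && (idx j == 1%N) then - e K 5
    else 0.

Definition tab_H5 (K : fieldType) : 'I_5 -> 'I_5 -> 'rV[K]_5 :=
  fun i j =>
    if (idx i == 1%N) && (idx j == 2%N) then e K 5
    else if (idx i == 2%N) && (idx j == 1%N) then - e K 5
    else if (idx i == 3%N) && (idx j == 4%N) then e K 5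
    else if (idx i == 4%N) && (idx j == 3%N) then - e K 5
    else 0.

(* Main.v *)
Require Import Defs.
From HB Require Import structures.
From mathcomp Require Import all_boot all_order all_algebra.
From Stdlib Require Import Classical.
Import GRing.Theory.
Local Open Scope ring_scope.

Module Helpers.
Set Implicit Arguments. Unset Strict Implicit.

Section Lin.
Variables (K : fieldType) (V : vectType K).

Lemma free_size (s : seq V) : free s -> (size s <= \dim (fullv : {vspace V}))%N.
Proof. move/eqP <-. exact: dimvS (subvf _). Qed.

Lemma free_ext (s : seq V) : free s -> (size s < \dim (fullv : {vspace V}))%N ->
  exists v, free (v :: s).
Proof.
move=> fs lt.
case: (boolP (all (fun v => v \in <<s>>%VS) (vbasis fullv))) => [/allP H | ].
- have: (fullv <= <<s>>)%VS.
    rewrite -{1}(span_basis (vbasisP fullv)). apply/span_subvP => v /H //.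
  move/dimvS. rewrite (eqP fs) => le. by rewrite ltnNge le in lt.
- rewrite -has_predC => /hasP [v _ /= nv]. exists v. by rewrite free_cons nv fs.
Qed.

Lemma free5E (v1 v2 v3 v4 v5 : V) : free [:: v1; v2; v3; v4; v5] ->
  forall c1 c2 c3 c4 c5 : K, c1 *: v1 + c2 *: v2 + c3 *: v3 + c4 *: v4 + c5 *: v5 = 0 ->
  [/\ c1 = 0, c2 = 0, c3 = 0, c4 = 0 & c5 = 0].
Proof.
move=> /(@freeP _ _ _ (in_tuple [:: v1; v2; v3; v4; v5])) H c1 c2 c3 c4 c5 E.
have := H (fun i => nth 0 [:: c1; c2; c3; c4; c5] i).
rewrite /= !big_ord_recl big_ord0 /= addr0 !addrA => /(_ E) F.
split; [exact: (F ord0) | exact: (F (@Ordinal 5 1 isT)) | exact: (F (@Ordinal 5 2 isT))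
       | exact: (F (@Ordinal 5 3 isT)) | exact: (F (@Ordinal 5 4 isT))].
Qed.

Lemma free5I (v1 v2 v3 v4 v5 : V) :
  (forall c1 c2 c3 c4 c5 : K, c1 *: v1 + c2 *: v2 + c3 *: v3 + c4 *: v4 + c5 *: v5 = 0 ->
  [/\ c1 = 0, c2 = 0, c3 = 0, c4 = 0 & c5 = 0]) -> free [:: v1; v2; v3; v4; v5].
Proof.
move=> H; apply/(@freeP _ _ _ (in_tuple [:: v1; v2; v3; v4; v5])) => k.
rewrite /= !big_ord_recl big_ord0 /= addr0 !addrA => /H [? ? ? ? ?].
case=> [[|[|[|[|[|?]]]]] Hi] //=;
match goal with Hk : k ?j = 0 |- k ?i = 0 => have ->: i = j by apply: val_inj end => //.
Qed.


Lemma free6I (v1 v2 v3 v4 v5 v6 : V) :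
  (forall c1 c2 c3 c4 c5 c6 : K,
   c1 *: v1 + c2 *: v2 + c3 *: v3 + c4 *: v4 + c5 *: v5 + c6 *: v6 = 0 ->
  [/\ c1 = 0, c2 = 0, c3 = 0, c4 = 0 & c5 = 0] /\ c6 = 0) ->
  free [:: v1; v2; v3; v4; v5; v6].
Proof.
move=> H; apply/(@freeP _ _ _ (in_tuple [:: v1; v2; v3; v4; v5; v6])) => k.
rewrite /= !big_ord_recl big_ord0 /= addr0 !addrA => /H [[? ? ? ? ?] ?].
case=> [[|[|[|[|[|[|?]]]]]] Hi] //=;
match goal with Hk : k ?j = 0 |- k ?i = 0 => have ->: i = j by apply: val_inj end => //.
Qed.

Lemma free3I (v1 v2 v3 : V) :
  (forall c1 c2 c3 : K, c1 *: v1 + c2 *: v2 + c3 *: v3 = 0 ->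
  [/\ c1 = 0, c2 = 0 & c3 = 0]) -> free [:: v1; v2; v3].
Proof.
move=> H; apply/(@freeP _ _ _ (in_tuple [:: v1; v2; v3])) => k.
rewrite /= !big_ord_recl big_ord0 /= addr0 !addrA => /H [? ? ?].
case=> [[|[|[|?]]] Hi] //=;
match goal with Hk : k ?j = 0 |- k ?i = 0 => have ->: i = j by apply: val_inj end => //.
Qed.

Lemma tri1 (y x1 x2 : V) (s : seq V) (a b : K) :
  free (y :: s) -> x1 \in s -> x2 \in s -> free ((y + a *: x1 + b *: x2) :: s).
Proof.
rewrite !free_cons => /andP [ny fs] h1 h2; rewrite fs andbT; apply: contra ny => H.
have -> : y = (y + a *: x1 + b *: x2) - b *: x2 - a *: x1 by rewrite !addrK.
apply: memvB; [apply: memvB; [exact: H | ] | ]; apply: memvZ; exact: memv_span.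
Qed.

End Lin.

Section Iso.
Variables (K : fieldType) (V : vectType K) (br : V -> V -> V).
Hypothesis bil : bilinear_br br.

Lemma brD_l x y z : br (x + y) z = br x z + br y z.
Proof. by have := bil.1 1 x y z; rewrite !scale1r. Qed.
Lemma br0_l z : br 0 z = 0.
Proof. have := brD_l 0 0 z; rewrite addr0 => /(congr1 (fun t => t - br 0 z)).
  by rewrite subrr addrK => <-. Qed.
Lemma brZ_l a x z : br (a *: x) z = a *: br x z.
Proof. have := bil.1 a x 0 z. rewrite addr0. rewrite br0_l. rewrite addr0. by []. Qed.
Lemma brD_r x y z : br z (x + y) = br z x + br z y.
Proof. by have := bil.2 1 z x y; rewrite !scale1r. Qed.
Lemma br0_r z : br z 0 = 0.
Proof. have := brD_r 0 0 z; rewrite addr0 => /(congr1 (fun t => t - br z 0)).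
  by rewrite subrr addrK => <-. Qed.
Lemma brZ_r a x z : br z (a *: x) = a *: br z x.
Proof. by have := bil.2 a z x 0; rewrite addr0 br0_r addr0. Qed.
Lemma brN_l x z : br (- x) z = - br x z.
Proof. by rewrite -scaleN1r brZ_l scaleN1r. Qed.
Lemma brN_r x z : br z (- x) = - br z x.
Proof. by rewrite -scaleN1r brZ_r scaleN1r. Qed.
Lemma brB_l x y z : br (x - y) z = br x z - br y z.
Proof. by rewrite brD_l brN_l. Qed.
Lemma brB_r x y z : br z (x - y) = br z x - br z y.
Proof. by rewrite brD_r brN_r. Qed.

Lemma br_suml I (r : seq I) (P : pred I) (F : I -> V) z :
  br (\sum_(i <- r | P i) F i) z = \sum_(i <- r | P i) br (F i) z.
Proof. exact: (big_morph (fun x => br x z) (fun x y => brD_l x y z) (br0_l z)). Qed.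
Lemma br_sumr I (r : seq I) (P : pred I) (F : I -> V) z :
  br z (\sum_(i <- r | P i) F i) = \sum_(i <- r | P i) br z (F i).
Proof. exact: (big_morph (fun x => br z x) (fun x y => brD_r x y z) (br0_r z)). Qed.

Definition gmap (X : 5.-tuple V) (c : 'rV[K]_5) : V := \sum_(i < 5) c 0 i *: X`_i.

Variable X : 5.-tuple V.

Lemma gmapL a x y : gmap X (a *: x + y) = a *: gmap X x + gmap X y.
Proof.
rewrite /gmap scaler_sumr -big_split; apply: eq_bigr => i _.
by rewrite !mxE scalerDl scalerA.
Qed.
Lemma gmap0 : gmap X 0 = 0.
Proof. by rewrite /gmap big1 // => i _; rewrite mxE scale0r. Qed.
Lemma gmapD x y : gmap X (x + y) = gmap X x + gmap X y.
Proof. by have := gmapL 1 x y; rewrite !scale1r. Qed.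
Lemma gmapZ a x : gmap X (a *: x) = a *: gmap X x.
Proof. by have := gmapL a x 0; rewrite !addr0 gmap0 addr0. Qed.
Lemma gmapN x : gmap X (- x) = - gmap X x.
Proof. by rewrite -scaleN1r gmapZ scaleN1r. Qed.
Lemma gmap_sum I (r : seq I) (P : pred I) (F : I -> 'rV[K]_5) :
  gmap X (\sum_(i <- r | P i) F i) = \sum_(i <- r | P i) gmap X (F i).
Proof. exact: (big_morph (gmap X) gmapD gmap0). Qed.

Lemma gmap_br (tab : 'I_5 -> 'I_5 -> 'rV[K]_5) :
  (forall i j, gmap X (tab i j) = br X`_i X`_j) ->
  forall c d, gmap X (br_of_table tab c d) = br (gmap X c) (gmap X d).
Proof.
move=> H c d; rewrite /br_of_table (@gmap_sum _ (index_enum _) xpredT) [in RHS]/gmap br_suml.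
apply: eq_bigr => i _; rewrite (@gmap_sum _ (index_enum _) xpredT) brZ_l br_sumr scaler_sumr.
apply: eq_bigr => j _; rewrite gmapZ H brZ_r scalerA.
by []. Qed.

Lemma gmap_delta (j : 'I_5) : gmap X (delta_mx 0 j) = X`_j.
Proof.
rewrite /gmap (bigD1 j) //= big1 ?addr0 => [|i nij]; rewrite !mxE eqxx /=.
  by rewrite eqxx scale1r.
by rewrite (negbTE nij) scale0r.
Qed.

Lemma gmap_e k : (k < 5)%N -> gmap X (e K k.+1) = X`_k.
Proof. by move=> hk; rewrite /e gmap_delta inordK. Qed.

Hypothesis dim5 : \dim (fullv : {vspace V}) = 5%N.
Hypothesis freeX : free X.

Lemma gmap_inj : injective (gmap X).
Proof.
move=> x y E.
have E0 : \sum_(i < 5) (x - y) 0 i *: X`_i = 0.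
  by rewrite -/(gmap X _) gmapD gmapN E subrr.
have := (freeP freeX) (fun i => (x - y) 0 i) E0 => F.
apply/eqP; rewrite -subr_eq0; apply/eqP/matrixP => i j.
by rewrite (ord1 i) F mxE.
Qed.

Definition fmap (v : V) : 'rV[K]_5 := \row_i coord X i v.

Lemma fmapK : cancel fmap (gmap X).
Proof.
move=> v.
have sp : <<X>>%VS = fullv.
  apply/eqP; rewrite eqEdim subvf /= dim5 (eqP freeX) size_tuple //.
rewrite /gmap [RHS](coord_span (X := X) (v := v)) ?sp ?memvf //.
by apply: eq_bigr => i _; rewrite mxE.
Qed.

Lemma gmapK : cancel (gmap X) fmap.
Proof. by move=> c; apply: gmap_inj; rewrite fmapK. Qed.

Lemma iso_of (tab : 'I_5 -> 'I_5 -> 'rV[K]_5) :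
  (forall i j, gmap X (tab i j) = br X`_i X`_j) ->
  acaa_iso br (br_of_table tab) fmap.
Proof.
move=> H; split.
- by move=> a x y; apply: gmap_inj; rewrite gmapL !fmapK.
- by exists (gmap X); [exact: fmapK | exact: gmapK].
- by move=> x y; apply: gmap_inj; rewrite (gmap_br H) !fmapK.
Qed.

End Iso.

Section Alg.
Variables (K : fieldType) (V : vectType K) (br : V -> V -> V).
Hypothesis hc : [pchar K] =i pred0.
Hypothesis acaa : is_acaa br.

Lemma bil : bilinear_br br. Proof. by case: acaa. Qed.
Lemma anti x y : br x y = - br y x. Proof. by case: acaa => _ h _; apply: h. Qed.
Lemma cyc x y z : br x (br y z) = br y (br z x). Proof. by case: acaa => _ _ h; apply: h. Qed.

Lemma two_nz : (2%:R : K) != 0.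
Proof. by rewrite ((pcharf0P K).1 hc 2). Qed.

Lemma double0 (v : V) : v = - v -> v = 0.
Proof.
move=> E; have : (2%:R : K) *: v = 0 by rewrite scaler_nat mulr2n {2}E subrr.
by move/eqP; rewrite scaler_eq0 (negbTE two_nz) /= => /eqP.
Qed.

Lemma self x : br x x = 0. Proof. exact/double0/anti. Qed.
Lemma selfT x z : br x (br x z) = 0.
Proof. by apply: double0; rewrite {1}cyc [br z x]anti (brN_r bil). Qed.
Lemma selfT2 x z : br z (br x z) = 0.
Proof. by rewrite [br x z]anti (brN_r bil) selfT oppr0. Qed.
Lemma II x y z w : br (br x y) (br z w) = 0.
Proof.
apply: double0.
have e1 : br (br x y) (br z w) = br z (br w (br x y)) := cyc _ _ _.
have e2 : br w (br x y) = br x (br y w) := cyc _ _ _.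
have e3 : br z (br x (br y w)) = br x (br (br y w) z) := cyc _ _ _.
have e4 : br (br y w) z = - br z (br y w) := anti _ _.
have e5 : br z (br y w) = br y (br w z) := cyc _ _ _.
have e6 : br w z = - br z w := anti _ _.
have e7 : br x (br y (br z w)) = br y (br (br z w) x) := cyc _ _ _.
have e8 : br y (br (br z w) x) = br (br z w) (br x y) := cyc _ _ _.
have e9 : br (br z w) (br x y) = - br (br x y) (br z w) := anti _ _.
by rewrite {1}e1 e2 e3 e4 e5 e6 !(brN_r bil) opprK e7 e8 e9.
Qed.

Hypothesis dim5 : \dim (fullv : {vspace V}) = 5%N.

Let bD_l := brD_l bil. Let bD_r := brD_r bil. Let bZ_l := brZ_l bil. Let bZ_r := brZ_r bil.
Let b0_l := br0_l bil. Let b0_r := br0_r bil. Let bN_l := brN_l bil. Let bN_r := brN_r bil.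
Let bB_l := brB_l bil. Let bB_r := brB_r bil.

Lemma scal_nz (c : K) (v : V) : v != 0 -> c *: v = 0 -> c = 0.
Proof. by move=> nv /eqP; rewrite scaler_eq0 (negbTE nv) orbF => /eqP. Qed.

Lemma twostep x y z : br x (br y z) = 0.
Proof.
apply/eqP; apply: contraT => na.
have c1 : br x (br z x) = 0 := selfT2 _ _.
have c2 : br y (br z x) = br x (br y z) by rewrite [RHS]cyc.
have c3 : br z (br x y) = br x (br y z) by rewrite [RHS]cyc [RHS]cyc.
suff : free [:: x; y; z; br y z; br z x; br x y].
  by move/free_size; rewrite dim5.
apply: free6I => k1 k2 k3 k4 k5 k6 E.
have Eu := congr1 (fun t => br t (br y z)) E.
have Ev := congr1 (fun t => br t (br z x)) E.
have Ew := congr1 (fun t => br t (br x y)) E.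
move: Eu Ev Ew; rewrite /= !bD_l !bZ_l !b0_l ?II ?self ?selfT ?selfT2 ?c1 ?c2 ?c3 ?scaler0 ?addr0 ?add0r => Eu Ev Ew.
move: (scal_nz na Eu) (scal_nz na Ev) (scal_nz na Ew) => h1 h2 h3; subst k1 k2 k3.
move: E; rewrite !scale0r !add0r => E.
have Ex := congr1 (fun t => br x t) E.
have Ey := congr1 (fun t => br y t) E.
have Ez := congr1 (fun t => br z t) E.
move: Ex Ey Ez; rewrite /= !bD_r !bZ_r !b0_r ?II ?self ?selfT ?selfT2 ?c1 ?c2 ?c3 ?scaler0 ?addr0 ?add0r => Ex Ey Ez.
by rewrite (scal_nz na Ex) (scal_nz na Ey) (scal_nz na Ez).
Qed.


Lemma central x y z : br (br y z) x = 0.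
Proof. by rewrite anti twostep oppr0. Qed.

Definition indep2 (p q : V) := forall a b : K, a *: p + b *: q = 0 -> a = 0 /\ b = 0.

Lemma solve_for (c : K) (f u : V) : c != 0 -> c *: f + u = 0 -> f = (- c^-1) *: u.
Proof.
move=> cn /eqP; rewrite addr_eq0 => /eqP E.
by rewrite -[f](scalerK cn) E scalerN scaleNr.
Qed.

Lemma dep_mult p q : q <> 0 -> ~ indep2 p q -> exists al, p = al *: q.
Proof.
move=> nq ni; apply: NNPP => nex; apply: ni => a b E.
case: (eqVneq a 0) => [a0 | an].
  subst; move: E; rewrite scale0r add0r => /eqP; rewrite scaler_eq0 => /orP [/eqP -> //|/eqP //].
exfalso; apply: nex; exists (- a^-1 * b).
by rewrite (solve_for an E) scalerA.
Qed.

Lemma ind_nz p q : indep2 p q -> p != 0 /\ q != 0.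
Proof.
move=> ind; split; apply/eqP => h.
  by have := ind 1 0; rewrite h scaler0 scale0r addr0 => /(_ erefl) [] /eqP; rewrite oner_eq0.
by have := ind 0 1; rewrite h scaler0 scale0r addr0 => /(_ erefl) [] _ /eqP; rewrite oner_eq0.
Qed.


Lemma caseI a b c : indep2 (br a b) (br a c) ->
  exists f, acaa_iso br (br_of_table (tab_N52 K)) f.
Proof.
move=> ind; have [n3 n5] := ind_nz ind.
have [l [m hf]] : exists l m, br b c = l *: br a b + m *: br a c.
  apply: NNPP => nex.
  suff : free [:: a; b; c; br a b; br a c; br b c] by move/free_size; rewrite dim5.
  apply: free6I => k1 k2 k3 k4 k5 k6 E.
  have Eb := congr1 (br b) E.
  have Ea := congr1 (br a) E.
  move: Eb Ea; rewrite /= !bD_r !bZ_r ?b0_r ?self ?twostep ?scaler0 ?addr0 ?add0r => Eb Ea.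
  have k30 : k3 = 0.
    apply/eqP; apply: contraT => k3n; exfalso; apply: nex.
    exists (- k3^-1 * - k1), 0.
    rewrite scale0r addr0 (solve_for k3n (etrans (addrC _ _) Eb)) anti scalerN. by rewrite -scaleNr scalerA.
  subst k3; move: Eb Ea; rewrite !scale0r !addr0 => Eb Ea.
  have k10 : k1 = 0.
    by apply: (scal_nz _ Eb); rewrite anti oppr_eq0.
  have [k20 _] : k2 = 0 /\ (0 : K) = 0 by apply: ind; rewrite scale0r addr0.
  subst k1 k2; move: E; rewrite !scale0r !add0r => E.
  have k60 : k6 = 0.
    apply/eqP; apply: contraT => k6n; exfalso; apply: nex.
    exists (- k6^-1 * k4), (- k6^-1 * k5).
    by rewrite (solve_for k6n (etrans (addrC _ _) E)) scalerDr !scalerA.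
  subst k6; move: E; rewrite scale0r addr0 => /ind [-> ->]; by [].
pose b' := b - m *: a; pose c' := c + l *: a.
have hab : br a b' = br a b by rewrite /b' bB_r bZ_r self scaler0 subr0.
have hac : br a c' = br a c by rewrite /c' bD_r bZ_r self scaler0 addr0.
have hbc : br b' c' = 0.
  rewrite /b' /c' bB_l !bD_r !bZ_l !bZ_r self scaler0 hf [br b a]anti.
  by rewrite scaler0 addr0 scalerN addrAC addrK subrr.
have hba : br b' a = - br a b by rewrite anti hab.
have hca : br c' a = - br a c by rewrite anti hac.
have hcb : br c' b' = 0 by rewrite anti hbc oppr0.
pose X := [tuple a; b'; br a b; c'; br a c].
have fX : free X.
  apply: free5I => k1 k2 k3 k4 k5 E.
  have Eb := congr1 (br b') E.
  have Ea := congr1 (br a) E.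
  move: Eb Ea; rewrite /= !bD_r !bZ_r ?b0_r ?self ?twostep ?hbc ?hab ?hac ?hba ?scaler0 ?addr0 ?add0r => Eb Ea.
  have k10 : k1 = 0 by apply: (scal_nz _ Eb); rewrite oppr_eq0.
  subst k1; move: Ea => /ind [k20 k40]; subst k2 k4.
  move: E; rewrite !scale0r !add0r addr0 => /ind [-> ->]; by [].
exists (fmap X); apply: (iso_of bil dim5 fX).
move=> i j; case: i => [[|[|[|[|[|?]]]]] Hi] //; case: j => [[|[|[|[|[|?]]]]] Hj] //;
  rewrite /tab_N52 /= ?gmap0 ?gmapN ?gmap_e //=;
  rewrite ?self ?twostep ?central ?hab ?hba ?hac ?hca ?hbc ?hcb //.
Qed.

Lemma abelian_case : (forall x y, br x y = 0) ->
  exists f, acaa_iso br (br_of_table (tab_abelian K)) f.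
Proof.
move=> ab.
have lt5 : forall n, (n < 5)%N -> (n < \dim (fullv : {vspace V}))%N by move=> n; rewrite dim5.
have [v1 f1] := free_ext (nil_free V) (lt5 0%N isT).
have [v2 f2] := free_ext f1 (lt5 1%N isT).
have [v3 f3] := free_ext f2 (lt5 2%N isT).
have [v4 f4] := free_ext f3 (lt5 3%N isT).
have [v5 f5] := free_ext f4 (lt5 4%N isT).
pose X := [tuple v5; v4; v3; v2; v1].
exists (fmap X); apply: (iso_of bil dim5 (X := X) f5).
by move=> i j; rewrite /tab_abelian gmap0 ab.
Qed.

Lemma caseII : (forall a b c, ~ indep2 (br a b) (br a c)) ->
  exists f, acaa_iso br (br_of_table (tab_abelian K)) f \/
    acaa_iso br (br_of_table (tab_H3K2 K)) f \/
    acaa_iso br (br_of_table (tab_N52 K)) f \/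
    acaa_iso br (br_of_table (tab_H5 K)) f.
Proof.
move=> nI.
have nI' : forall a b c, br a c != 0 -> exists al, br a b = al *: br a c.
  by move=> a b c nz; apply: dep_mult; [exact/eqP | exact: nI].
case: (classic (forall x y, br x y = 0)) => [ab | nab].
  by have [f hf] := abelian_case ab; exists f; left.
have [x1 [x2 nw]] : exists x1 x2, br x1 x2 != 0.
  apply: NNPP => N; apply: nab => x y; apply: NNPP => h; apply: N.
  by exists x, y; apply/eqP.
have nw' : br x2 x1 != 0 by rewrite anti oppr_eq0.
have proj : forall v, exists s1 s2, br x1 (v + s1 *: x1 + s2 *: x2) = 0 /\
                                   br x2 (v + s1 *: x1 + s2 *: x2) = 0.
  move=> v; have [al ha] := nI' x1 v x2 nw; have [be hb] := nI' x2 v x1 nw'.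
  exists (- be), (- al); rewrite !bD_r !bZ_r !self !scaler0 ?addr0 ha hb scaleNr subrr.
  by rewrite scaleNr subrr.
have comm : forall v u, br x1 v = 0 -> br x2 v = 0 -> br x1 u = 0 ->
    exists g, br v u = g *: br x1 x2.
  move=> v u h1v h2v h1u.
  have nz : br (x1 + v) x2 != 0 by rewrite bD_l [br v x2]anti h2v oppr0 addr0.
  have [g hg] := nI' (x1 + v) u x2 nz.
  by exists g; move: hg; rewrite !bD_l h1u add0r [br v x2]anti h2v oppr0 addr0.
have w1 : br x1 (br x1 x2) = 0 := twostep _ _ _.
case: (classic (exists v u, [/\ br x1 v = 0, br x2 v = 0, br x1 u = 0, br x2 u = 0 & br v u != 0]))
  => [[v [u [h1v h2v h1u h2u nvu]]] | nex].
  have [g hg] := comm v u h1v h2v h1u.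
  have gn : g != 0 by apply: contraNneq nvu => g0; rewrite hg g0 scale0r.
  pose u' := g^-1 *: u.
  have hvu : br v u' = br x1 x2 by rewrite /u' bZ_r hg scalerA mulVf // scale1r.
  have huv : br u' v = - br x1 x2 by rewrite anti hvu.
  have h1u' : br x1 u' = 0 by rewrite /u' bZ_r h1u scaler0.
  have h2u' : br x2 u' = 0 by rewrite /u' bZ_r h2u scaler0.
  have hu'1 : br u' x1 = 0 by rewrite anti h1u' oppr0.
  have hu'2 : br u' x2 = 0 by rewrite anti h2u' oppr0.
  have hv1 : br v x1 = 0 by rewrite anti h1v oppr0.
  have hv2 : br v x2 = 0 by rewrite anti h2v oppr0.
  have h21 : br x2 x1 = - br x1 x2 by rewrite anti.
  clearbody u'.
  pose X := [tuple x1; x2; v; u'; br x1 x2].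
  have fX : free X.
    apply: free5I => k1 k2 k3 k4 k5 E.
    have E1 := congr1 (br x1) E. have E2 := congr1 (br x2) E.
    have E3 := congr1 (br v) E. have E4 := congr1 (br u') E.
    move: E1 E2 E3 E4; rewrite /= !bD_r !bZ_r ?b0_r ?self ?twostep ?h1v ?h2v ?h1u' ?h2u'
      ?hvu ?huv ?hu'1 ?hu'2 ?hv1 ?hv2 ?scaler0 ?addr0 ?add0r => E1 E2 E3 E4.
    have k20 := scal_nz nw E1. have k10 := scal_nz nw' E2.
    have k40 := scal_nz nw E3. have k30 : k3 = 0 by apply: (scal_nz _ E4); rewrite oppr_eq0.
    subst k1 k2 k3 k4; move: E; rewrite !scale0r !add0r => /(scal_nz nw) ->; by [].
  exists (fmap X); right; right; right; apply: (iso_of bil dim5 fX).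
  move=> i j; case: i => [[|[|[|[|[|?]]]]] Hi] //; case: j => [[|[|[|[|[|?]]]]] Hj] //;
    rewrite /tab_H5 /= ?gmap0 ?gmapN ?gmap_e //=;
    rewrite ?self ?twostep ?central ?h1v ?h2v ?h1u' ?h2u' ?hvu ?huv ?hu'1 ?hu'2 ?hv1 ?hv2 ?h21 //.
have allc : forall v u, br x1 v = 0 -> br x2 v = 0 -> br x1 u = 0 -> br x2 u = 0 -> br v u = 0.
  move=> v u h1 h2 h3 h4; apply/eqP; apply: contraT => nvu; exfalso; apply: nex.
  by exists v, u.
have h21 : br x2 x1 = - br x1 x2 by rewrite anti.
have f3 : free [:: x1; x2; br x1 x2].
  apply: free3I => k1 k2 k3 E.
  have E1 := congr1 (br x1) E. have E2 := congr1 (br x2) E.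
  move: E1 E2; rewrite /= !bD_r !bZ_r ?b0_r ?self ?twostep ?scaler0 ?addr0 ?add0r => E1 E2.
  have k20 := scal_nz nw E1. have k10 := scal_nz nw' E2.
  subst k1 k2; move: E; rewrite !scale0r !add0r => /(scal_nz nw) ->; by [].
have lt5 : forall n, (n < 5)%N -> (n < \dim (fullv : {vspace V}))%N by move=> n; rewrite dim5.
have [y fy] := free_ext f3 (lt5 3%N isT).
have [s1 [s2 [h1y h2y]]] := proj y.
have fy' : free ((y + s1 *: x1 + s2 *: x2) :: [:: x1; x2; br x1 x2]).
  by apply: tri1 => //; rewrite !inE eqxx ?orbT.
set y' := y + s1 *: x1 + s2 *: x2 in h1y h2y fy'; clearbody y'.
have [z fz] := free_ext fy' (lt5 4%N isT).
have [t1 [t2 [h1z h2z]]] := proj z.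
have fz' : free ((z + t1 *: x1 + t2 *: x2) :: [:: y'; x1; x2; br x1 x2]).
  by apply: tri1 => //; rewrite !inE eqxx ?orbT.
set z' := z + t1 *: x1 + t2 *: x2 in h1z h2z fz'; clearbody z'.
have hyz := allc _ _ h1y h2y h1z h2z.
have hzy := allc _ _ h1z h2z h1y h2y.
have hy1 : br y' x1 = 0 by rewrite anti h1y oppr0.
have hy2 : br y' x2 = 0 by rewrite anti h2y oppr0.
have hz1 : br z' x1 = 0 by rewrite anti h1z oppr0.
have hz2 : br z' x2 = 0 by rewrite anti h2z oppr0.
pose X := [tuple x1; x2; br x1 x2; z'; y'].
have fX : free X.
  have pe : perm_eq [:: z'; y'; x1; x2; br x1 x2] [:: x1; x2; br x1 x2; z'; y'].
    change (perm_eq ([:: z'; y'] ++ [:: x1; x2; br x1 x2]) ([:: x1; x2; br x1 x2] ++ [:: z'; y'])).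
    by rewrite perm_catC.
  exact: (etrans (esym (perm_free pe)) fz').
exists (fmap X); right; left; apply: (iso_of bil dim5 fX).
move=> i j; case: i => [[|[|[|[|[|?]]]]] Hi] //; case: j => [[|[|[|[|[|?]]]]] Hj] //;
  rewrite /tab_H3K2 /= ?gmap0 ?gmapN ?gmap_e //=;
  rewrite ?self ?twostep ?central ?h1y ?h2y ?h1z ?h2z ?hyz ?hzy ?hy1 ?hy2 ?hz1 ?hz2 ?h21 //.
Qed.

End Alg.

End Helpers.
Import Helpers.

Theorem mainTheorem5 (K : fieldType) (V : vectType K) (br : V -> V -> V) :
  [pchar K] =i pred0 ->
  \dim (fullv : {vspace V}) = 5%N ->
  is_acaa br ->
  exists f : V -> 'rV[K]_5,
    acaa_iso br (br_of_table (tab_abelian K)) f \/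
    acaa_iso br (br_of_table (tab_H3K2 K)) f \/
    acaa_iso br (br_of_table (tab_N52 K)) f \/
    acaa_iso br (br_of_table (tab_H5 K)) f.
Proof.
move=> hc dim5 acaa.
case: (classic (exists a b c, indep2 (br a b) (br a c))) => [[a [b [c ind]]] | nI].
  have [f hf] := caseI hc acaa dim5 ind.
  by exists f; right; right; left.
apply: (caseII hc acaa dim5) => a b c h; apply: nI; by exists a, b, c.
Qed.
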